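(* Let $\Gamma$ be a symmetric bimatrix game. If $\Gamma$ has a Nash equilibrium that is not symmetric, i.e., $\mathrm{Nash}_{\mathrm{sym}}(\Gamma)\subsetneq\mathrm{Nash}(\Gamma)$, then $\mathrm{XE}_{\mathrm{sym}}(\Gamma)\subsetneq\mathrm{CE}_{\mathrm{sym}}(\Gamma)$.
   Context: A symmetric bimatrix game: two players with the same finite strategy set $C_1$ ($|C_1|=m\ge2$) and utilities with $u_1(s_1,s_2)=u_2(s_2,s_1)$. $\mathrm{Nash}(\Gamma)$ is the set of mixed Nash equilibria $(\pi_1,\pi_2)$; $\mathrm{Nash}_{\mathrm{sym}}(\Gamma)$ those with $\pi_1=\pi_2$. Distributions on $C_1\times C_1$ are $m\times m$ nonnegative matrices summing to one. A correlated equilibrium is a distribution $\pi$ such that for each player $i$ and all $s_i,t_i$, $\sum_{s_{-i}}[u_i(t_i,s_{-i})-u_i(s)]\pi(s)\le0$. $\mathrm{CE}_{\mathrm{sym}}(\Gamma)$ is the set of correlated equilibria that are symmetric matrices, and $\mathrm{XE}_{\mathrm{sym}}(\Gamma)$ (exchangeable equilibria) is the set of correlated equilibria lying in $\mathrm{conv}\{xx^T:x\text{ a probability vector on }C_1\}$. *)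

(* Defs.v *)
From mathcomp Require Import all_boot all_order all_algebra.
Set Implicit Arguments. Unset Strict Implicit. Unset Printing Implicit Defensive.
Import Order.TTheory GRing.Theory Num.Theory.
Local Open Scope ring_scope.

(* A symmetric bimatrix game with strategy set 'I_m for both players is given by
   u : 'I_m -> 'I_m -> R, the utility of player 1: u1 (s1,s2) = u s1 s2;
   player 2's utility is u2 (s1,s2) = u s2 s1 (so u1(s1,s2) = u2(s2,s1)). *)

Section Game.
Variables (R : realFieldType) (m : nat).
Implicit Types (u : 'I_m -> 'I_m -> R).

Definition u1 u (s1 s2 : 'I_m) : R := u s1 s2.
Definition u2 u (s1 s2 : 'I_m) : R := u s2 s1.

Definition is_prob (x : 'I_m -> R) : Prop :=
  (forall i, 0 <= x i) /\ \sum_i x i = 1.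

Definition is_dist (pi : 'M[R]_m) : Prop :=
  (forall i j, 0 <= pi i j) /\ \sum_i \sum_j pi i j = 1.

Definition is_Nash u (p1 p2 : 'I_m -> R) : Prop :=
  [/\ is_prob p1, is_prob p2,
      (forall t : 'I_m,
         \sum_s1 \sum_s2 p1 s1 * p2 s2 * u1 u t s2
           <= \sum_s1 \sum_s2 p1 s1 * p2 s2 * u1 u s1 s2) &
      (forall t : 'I_m,
         \sum_s1 \sum_s2 p1 s1 * p2 s2 * u2 u s1 t
           <= \sum_s1 \sum_s2 p1 s1 * p2 s2 * u2 u s1 s2)].

Definition is_CE u (pi : 'M[R]_m) : Prop :=
  [/\ is_dist pi,
      (forall s1 t1 : 'I_m,
         \sum_s2 (u1 u t1 s2 - u1 u s1 s2) * pi s1 s2 <= 0) &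
      (forall s2 t2 : 'I_m,
         \sum_s1 (u2 u s1 t2 - u2 u s1 s2) * pi s1 s2 <= 0)].

Definition CE_sym u (pi : 'M[R]_m) : Prop := is_CE u pi /\ pi^T = pi.

Definition in_conv_xxT (pi : 'M[R]_m) : Prop :=
  exists (k : nat) (lam : 'I_k -> R) (x : 'I_k -> 'I_m -> R),
    [/\ forall l, 0 <= lam l, \sum_l lam l = 1,
        forall l, is_prob (x l) &
        pi = \sum_l lam l *: \matrix_(i, j) (x l i * x l j)].

Definition XE_sym u (pi : 'M[R]_m) : Prop := is_CE u pi /\ in_conv_xxT pi.

End Game.

(* Main.v *)
Require Import Defs.
From mathcomp Require Import all_boot all_order all_algebra.
From mathcomp Require Import ring lra.
Import Order.TTheory GRing.Theory Num.Theory.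
Local Open Scope ring_scope.

Lemma best_resp (R : realFieldType) (m : nat) (p f : 'I_m -> R) :
  is_prob p -> (forall t, f t <= \sum_s p s * f s) ->
  forall s t, p s * (f t - f s) <= 0.
Proof.
move=> [p0 p1] H s t.
set E := \sum_s p s * f s.
have Z : \sum_s p s * (E - f s) = 0.
  under eq_bigr => i _ do rewrite mulrBr.
  by rewrite sumrB -mulr_suml p1 mul1r subrr.
have Z2 : forall s, p s * (E - f s) = 0.
  move=> s'; apply/eqP; move/eqP: Z; rewrite psumr_eq0 /=.
    by move/allP/(_ s' (mem_index_enum _)).
  by move=> i _; apply: mulr_ge0 => //; rewrite subr_ge0.
have := Z2 s; have := H t; have := p0 s.
move=> a b c.
have -> : p s * (f t - f s) = p s * (f t - E) + p s * (E - f s) by ring.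
rewrite c addr0; apply: mulr_ge0_le0 => //; rewrite subr_le0 //.
Qed.

Lemma exists_gt (R : realFieldType) (m : nat) (p q : 'I_m -> R) k :
  \sum_i p i = \sum_i q i -> p k <> q k -> exists i, q i < p i.
Proof.
move=> S Hk; case: (boolP [exists i, q i < p i]) => [/existsP//|].
rewrite negb_exists => /forallP H.
have le : forall i, p i <= q i by move=> i; rewrite leNgt; apply: H.
exfalso.
apply: Hk; apply/eqP; rewrite -subr_eq0 -oppr_eq0 opprB.
have Z : \sum_i (q i - p i) = 0 by rewrite sumrB S subrr.
move/eqP: Z; rewrite psumr_eq0 /=; last by move=> i _; rewrite subr_ge0.
by move/allP/(_ k (mem_index_enum _)).
Qed.

Lemma dsum1 (R : realFieldType) (m : nat) (a b : 'I_m -> R) (g : 'I_m -> 'I_m -> R) :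
  \sum_s1 \sum_s2 a s1 * b s2 * g s1 s2 = \sum_s1 a s1 * \sum_s2 b s2 * g s1 s2.
Proof. by apply: eq_bigr => s1 _; rewrite mulr_sumr; apply: eq_bigr => s2 _; rewrite mulrA. Qed.

Lemma dsum2 (R : realFieldType) (m : nat) (a b : 'I_m -> R) (g : 'I_m -> 'I_m -> R) :
  \sum_s1 \sum_s2 a s1 * b s2 * g s1 s2 = \sum_s2 b s2 * \sum_s1 a s1 * g s1 s2.
Proof.
rewrite exchange_big; apply: eq_bigr => s2 _; rewrite mulr_sumr; apply: eq_bigr => s1 _.
by rewrite mulrA (mulrC (b s2)).
Qed.

Lemma sum_half (R : realFieldType) (m : nat) (a c : R) (b d : 'I_m -> R) :
  \sum_j (a * b j + c * d j) / 2 = (a * \sum_j b j + c * \sum_j d j) / 2.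
Proof. by rewrite !mulr_sumr -big_split mulr_suml. Qed.

Theorem theorem3p5 (R : realFieldType) (m : nat) (hm : (2 <= m)%N)
    (u : 'I_m -> 'I_m -> R) :
  (exists p1 p2 : 'I_m -> R, is_Nash u p1 p2 /\ exists i, p1 i <> p2 i) ->
  (forall pi : 'M[R]_m, XE_sym u pi -> CE_sym u pi) /\
  (exists pi : 'M[R]_m, CE_sym u pi /\ ~ XE_sym u pi).
Proof.
move=> [p1 [p2 [[P1 P2 N1 N2] [k Hk]]]].
split.
  move=> pi [CE [k' [lam [x [_ _ _ Epi]]]]]; split => //.
  rewrite Epi; apply/matrixP => i j; rewrite mxE !summxE; apply: eq_bigr => l _.
  by rewrite !mxE (mulrC (x l i)).
pose f s := \sum_s2 p2 s2 * u s s2.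
pose g s := \sum_s1 p1 s1 * u s s1.
have F : forall t, f t <= \sum_s p1 s * f s.
  move=> t; have := N1 t; rewrite /u1 !dsum1 -mulr_suml (proj2 P1) mul1r.
  by [].
have G : forall t, g t <= \sum_s p2 s * g s.
  move=> t; have := N2 t; rewrite /u2 !dsum2 -mulr_suml (proj2 P2) mul1r.
  by [].
have BF := @best_resp _ _ _ _ P1 F.
have BG := @best_resp _ _ _ _ P2 G.
pose pi : 'M[R]_m := \matrix_(i, j) ((p1 i * p2 j + p2 i * p1 j) / 2).
have Hpi : forall i j, pi i j = (p1 i * p2 j + p2 i * p1 j) / 2 by move=> i j; rewrite mxE.
have [P10 P11] := P1; have [P20 P21] := P2.
exists pi; split.
  split; last by apply/matrixP => i j; rewrite !mxE; ring.
  split.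
  - split.
      by move=> i j; rewrite Hpi; apply: divr_ge0 => //; apply: addr_ge0; apply: mulr_ge0.
    under eq_bigr do under eq_bigr do rewrite Hpi.
    under eq_bigr do rewrite sum_half P11 P21 !mulr1.
    rewrite -mulr_suml big_split /= P11 P21; by field.
  - move=> s1 t1.
    have -> : \sum_s2 (u1 u t1 s2 - u1 u s1 s2) * pi s1 s2 =
      (p1 s1 * (f t1 - f s1) + p2 s1 * (g t1 - g s1)) / 2.
      rewrite /f /g -!sumrB !mulr_sumr -big_split /= mulr_suml; apply: eq_bigr => s2 _.
      rewrite Hpi /u1; ring.
    have := BF s1 t1; have := BG s1 t1; lra.
  - move=> s2 t2.
    have -> : \sum_s1 (u2 u s1 t2 - u2 u s1 s2) * pi s1 s2 =
      (p2 s2 * (g t2 - g s2) + p1 s2 * (f t2 - f s2)) / 2.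
      rewrite /f /g -!sumrB !mulr_sumr -big_split /= mulr_suml; apply: eq_bigr => s1 _.
      rewrite Hpi /u2; ring.
    have := BF s2 t2; have := BG s2 t2; lra.
move=> [_ [k' [lam [x [L0 L1 Px Epi]]]]].
have [i Hi] := @exists_gt _ _ _ _ _ (etrans P11 (esym P21)) Hk.
have [j Hj] : exists j, p1 j < p2 j.
  by apply: (@exists_gt _ _ _ _ _ (etrans P21 (esym P11))); move/esym/Hk.
pose a := p1 j + p2 j.
pose b := p1 i + p2 i.
pose Q (M : 'M[R]_m) := a * a * M i i - a * b * M i j - a * b * M j i + b * b * M j j.
have H1 : Q pi = - (p1 i * p2 j - p2 i * p1 j) ^+ 2.
  rewrite /Q !Hpi /a /b; by field.
have E : forall p q, pi p q = \sum_l lam l * (x l p * x l q).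
  by move=> p q; rewrite Epi summxE; apply: eq_bigr => l _; rewrite !mxE.
have H2 : 0 <= Q pi.
  rewrite /Q !E !mulr_sumr -!sumrB -big_split /=; apply: sumr_ge0 => l _.
  rewrite (_ : _ + _ = lam l * (a * x l i - b * x l j) ^+ 2); last by ring.
  by apply: mulr_ge0 => //; apply: sqr_ge0.
have D : 0 < p1 i * p2 j - p2 i * p1 j.
  have h1 : p2 i * p1 j <= p2 i * p2 j by apply: ler_wpM2l => //; apply: ltW.
  have h2 : p2 i * p2 j < p1 i * p2 j.
    by rewrite ltr_pM2r //; apply: le_lt_trans Hj.
  by rewrite subr_gt0; apply: le_lt_trans h2.
have := exprn_gt0 2 D; lra.
Qed.
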